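(* Consider the following market. There are $n\ge 3$ agents $[n]=\{1,\dots,n\}$ and a seller with an unlimited supply of an identical good (at most one copy per agent, zero production cost). Each agent $i$ has a private valuation function $v_i:2^{[n]}\to\mathbb{R}$ on possible winning sets $S\subseteq[n]$, satisfying: $v_i(S)\ge 0$; $v_i(S)=0$ if $i\notin S$; $v_i(S)\le v_i(R)$ whenever $S\subseteq R$; and $v_i(S\cup R)\le v_i(S)+v_i(R)$ for all $S,R\subseteq[n]$ with $i\in S\cap R$. Agents report bid functions $b_i$. Define the mechanism $\mathcal{M}$ as follows. 1. Independently and uniformly at random put every agent into one of three sets $A,B,C$. 2. For $X\in\{A,B\}$ let $r_X(C)=\max\{c\cdot|T| : c\ge 0,\ T\subseteq C,\ b_i(T\cup X)\ge c \text{ for all } i\in T\}$, and let $r(C)=\max\{r_A(C),r_B(C)\}$. 3. Give the good to every agent of $A$ for free. 4. Run the cost-sharing procedure with $r=r(C)$: set $S\leftarrow B$; repeat: let $T=\{i\in S : b_i(S\cup A)<r/|S|\}$ and set $S\leftarrow S\setminus T$, until $T=\emptyset$. If $S\neq\emptyset$, sell the good to every agent of $S$ at price $r/|S|$. Agents of $C$ and unsold agents of $B$ get nothing and pay nothing. Then $\mathcal{M}$ is universally truthful, and when all agents bid truthfully ($b_i=v_i$) its expected revenue is at least $\mathcal{F}^{(3)}(v)/324$, where $\mathcal{F}^{(3)}(v)=\max\{c\cdot|S| : c\ge 0,\ S\subseteq[n],\ |S|\ge 3,\ v_i(S)\ge c\text{ for all } i\in S\}$.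
   Context: For a deterministic mechanism selecting a winning set $S$ and prices $p_i$ for $i\in S$ (others pay $0$), agent $i$'s utility is $v_i(S)-p_i$ if $i\in S$ and $0$ otherwise; the revenue is $\sum_{i\in S}p_i$. A deterministic mechanism is truthful if for every agent $i$ and every fixed reports of the others, reporting $b_i=v_i$ maximizes $i$'s utility. A randomized mechanism is universally truthful if it is a probability distribution over deterministic truthful mechanisms. *)

(* Defs.v *)
From HB Require Import structures.
From mathcomp Require Import all_boot all_order all_algebra.
From mathcomp Require Import boolp classical_sets reals.
Import Order.TTheory GRing.Theory Num.Theory.
Local Open Scope ring_scope.
Local Open Scope classical_set_scope.

Set Implicit Arguments.
Unset Strict Implicit.
Unset Printing Implicit Defensive.

(* Agents are 'I_n = {0,...,n-1} (standing for [n]).  A (bid or valuation)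
   function of one agent maps winning sets S ⊆ [n] to reals. *)
Definition setfun (R : realType) (n : nat) := {set 'I_n} -> R.
Definition profile (R : realType) (n : nat) := 'I_n -> setfun R n.

Definition valuation_ok (R : realType) (n : nat) (i : 'I_n) (v : setfun R n) : Prop :=
  [/\ (forall S : {set 'I_n}, 0 <= v S),
      (forall S : {set 'I_n}, i \notin S -> v S = 0),
      (forall S T : {set 'I_n}, S \subset T -> v S <= v T)
    & (forall S T : {set 'I_n}, i \in S :&: T -> v (S :|: T) <= v S + v T)].

Definition upd (R : realType) (n : nat) (b : profile R n) (i : 'I_n) (bi : setfun R n)
  : profile R n := fun j => if j == i then bi else b j.

(* An outcome of a deterministic mechanism: a winning set and the prices
   (prices of non-winners are irrelevant / 0). *)
Definition outcome (R : realType) (n : nat) := ({set 'I_n} * ('I_n -> R))%type.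

Definition utility (R : realType) (n : nat) (i : 'I_n) (v : setfun R n)
  (o : outcome R n) : R :=
  if i \in o.1 then v o.1 - o.2 i else 0.

Definition revenue (R : realType) (n : nat) (o : outcome R n) : R :=
  \sum_(i in o.1) o.2 i.

Definition truthful (R : realType) (n : nat) (M : profile R n -> outcome R n) : Prop :=
  forall (i : 'I_n) (vi : setfun R n), valuation_ok i vi ->
  forall (b : profile R n) (bi : setfun R n),
    utility i vi (M (upd b i bi)) <= utility i vi (M (upd b i vi)).

(* A random partition into A, B, C: a map 'I_n -> 'I_3 (0 = A, 1 = B, 2 = C),
   all 3^n maps being equally likely. *)
Definition grp (n : nat) (p : {ffun 'I_n -> 'I_3}) (k : nat) : {set 'I_n} :=
  [set i | nat_of_ord (p i) == k].

(* r_X(C) = max { c |T| : c >= 0, T ⊆ C, b_i(T ∪ X) >= c for all i in T }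
   (the maximum exists; it is the supremum of this set of reals). *)
Definition r_X (R : realType) (n : nat) (b : profile R n) (X C : {set 'I_n}) : R :=
  sup [set x : R | exists (c : R) (T : {set 'I_n}),
         [/\ 0 <= c, T \subset C, (forall i, i \in T -> c <= b i (T :|: X))
           & x = c * #|T|%:R]].

Definition cs_step (R : realType) (n : nat) (b : profile R n) (A : {set 'I_n}) (r : R)
  (S : {set 'I_n}) : {set 'I_n} :=
  S :\: [set i in S | b i (S :|: A) < r / #|S|%:R].

(* Repeat until no agent is removed: each non-final round removes at least one
   agent of B ⊆ [n], so after n rounds the fixed point is reached. *)
Definition cs_final (R : realType) (n : nat) (b : profile R n) (A B : {set 'I_n}) (r : R)
  : {set 'I_n} := iter n (cs_step b A r) B.

Definition mech (R : realType) (n : nat) (p : {ffun 'I_n -> 'I_3}) (b : profile R n)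
  : outcome R n :=
  let A := grp p 0 in
  let B := grp p 1 in
  let C := grp p 2 in
  let r := Num.max (r_X b A C) (r_X b B C) in
  let S := cs_final b A B r in
  (A :|: S, fun i => if i \in S then r / #|S|%:R else 0).

Definition exp_revenue (R : realType) (n : nat) (b : profile R n) : R :=
  (3 ^ n)%:R^-1 * \sum_(p : {ffun 'I_n -> 'I_3}) revenue (mech p b).

Definition F3 (R : realType) (n : nat) (v : profile R n) : R :=
  sup [set x : R | exists (c : R) (S : {set 'I_n}),
         [/\ 0 <= c, (3 <= #|S|)%N, (forall i, i \in S -> c <= v i S)
           & x = c * #|S|%:R]].

(* Main.v *)
Require Import Defs.
From HB Require Import structures.
From mathcomp Require Import all_boot all_order all_algebra.
From mathcomp Require Import boolp classical_sets reals.
From mathcomp Require Import fingroup perm.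
From mathcomp Require Import zify ring lra.
Import fintype finset.
Import Order.TTheory GRing.Theory Num.Theory.
Local Open Scope ring_scope.
Local Open Scope classical_set_scope.

Section RX.
Variables (R : realType) (n : nat).
Implicit Types (b : profile R n) (X C T : {set 'I_n}).

Definition rset b X C := [set x : R | exists (c : R) (T : {set 'I_n}),
         [/\ 0 <= c, T \subset C, (forall i, i \in T -> c <= b i (T :|: X))
           & x = c * #|T|%:R]].

Lemma rX_def b X C : r_X b X C = sup (rset b X C). Proof. by []. Qed.

Lemma sum_ge_term (I : finType) (F : I -> R) i :
  (forall j, 0 <= F j) -> F i <= \sum_j F j.
Proof. by move=> h; rewrite (bigD1 i) //= lerDl sumr_ge0. Qed.

Lemma rset_ub b X C : has_ubound (rset b X C).
Proof.
exists (\sum_(T : {set 'I_n}) \sum_(i : 'I_n) `|b i (T :|: X)| * n%:R).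
apply/ubP => x [c [T [c0 TC hT ->]]].
have h0 : 0 <= \sum_(T : {set 'I_n}) \sum_(i : 'I_n) `|b i (T :|: X)| * n%:R.
  by apply: sumr_ge0 => T' _; apply: sumr_ge0 => i _; rewrite mulr_ge0.
have [->|[i iT]] := set_0Vmem T; first by rewrite cards0 mulr0.
have hs := @sum_ge_term _ (fun T0 : {set 'I_n} => \sum_(i : 'I_n) `|b i (T0 :|: X)| * n%:R) T.
apply: (le_trans _ (hs _)); last first.
  by move=> T'; apply: sumr_ge0 => j _; rewrite mulr_ge0.
have hs2 := @sum_ge_term _ (fun i : 'I_n => `|b i (T :|: X)| * n%:R) i.
apply: (le_trans _ (hs2 _)); last by move=> j; rewrite mulr_ge0.
apply: ler_pM => //.
  by apply: le_trans (hT i iT) (real_ler_norm _); rewrite num_real.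
by rewrite ler_nat -[n in (_ <= n)%N]card_ord max_card.
Qed.

Lemma rset0 b X C : rset b X C 0.
Proof. by exists 0, (finset.set0 : {set 'I_n}); split; rewrite ?finset.sub0set ?mul0r // => i; rewrite finset.in_set0. Qed.

Lemma rX_ge0 b X C : 0 <= r_X b X C.
Proof. by move/ubP: (ub_le_sup (rset_ub b X C)); apply; apply: rset0. Qed.

Lemma rX_ge b X C c T : 0 <= c -> T \subset C ->
  (forall i, i \in T -> c <= b i (T :|: X)) -> c * #|T|%:R <= r_X b X C.
Proof.
move=> c0 TC hT; move/ubP: (ub_le_sup (rset_ub b X C)); apply.
by exists c, T; split.
Qed.
Lemma rX_attain b X C r : 0 < r -> r <= r_X b X C ->
  exists T, [/\ T \subset C, T != finset.set0 &
    forall i, i \in T -> r <= #|T|%:R * b i (T :|: X)].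
Proof.
move=> r0 hr.
case: (pselect (exists T, [/\ T \subset C, T != finset.set0 &
    forall i, i \in T -> r <= #|T|%:R * b i (T :|: X)])) => // hn.
exfalso.
pose g (T : {set 'I_n}) : R :=
  if [pick i in T | #|T|%:R * b i (T :|: X) < r] is Some i
  then #|T|%:R * b i (T :|: X) else 0.
pose M := \big[Num.max/0]_(T : {set 'I_n}) g T.
have Mr : M < r.
  rewrite /M; apply: (big_ind (fun y => y < r)) => //.
    by move=> x y hx hy; rewrite gt_max hx hy.
  move=> T _; rewrite /g; case: pickP => [i /andP[_ ->]|] //.
have : r_X b X C <= M.
  apply: ge_sup; first by exists 0; apply: rset0.
  apply/ubP => x [c [T [c0 TC hT ->]]].
  have [->|[i iT]] := set_0Vmem T.
    rewrite cards0 mulr0; apply: le_trans (le_bigmax _ _ finset.set0).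
    by rewrite /g; case: pickP => [i|]; rewrite ?finset.in_set0.
  apply: le_trans (le_bigmax _ _ T).
  rewrite /g; case: pickP => [j /andP[jT _]|hno].
    by rewrite mulrC ler_wpM2l // hT.
  exfalso; apply: hn; exists T; split => //.
    by apply/set0Pn; exists i.
  move=> k kT; have := hno k; rewrite kT /= => /negbT.
  by rewrite -leNgt.
by move=> h; have := le_lt_trans (le_trans hr h) Mr; rewrite ltxx.
Qed.
End RX.
Section CS.
Variables (R : realType) (n : nat) (b : profile R n) (A : {set 'I_n}) (r : R).
Local Notation step := (cs_step b A r).

Lemma step_sub S : step S \subset S.
Proof. exact: subsetDl. Qed.

Lemma iter_step_sub B k : iter k step B \subset B.
Proof.
elim: k => [|k IH] /=; first exact: subxx.
exact: (fintype.subset_trans (step_sub _) IH).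
Qed.

Lemma iter_stable B j : step (iter j step B) = iter j step B ->
  forall m, (j <= m)%N -> iter m step B = iter j step B.
Proof.
move=> h m /subnK <-; elim: (m - j)%N => [|d IH]; first by [].
by rewrite addSn /= IH h.
Qed.

Lemma fix_or_small B k : (exists j, (j <= k)%N /\ step (iter j step B) = iter j step B)
  \/ (#|iter k step B| + k <= #|B|)%N.
Proof.
elim: k => [|k [[j [jk hj]]|IH]]; first by right; rewrite addn0.
  by left; exists j; split => //; rewrite (leq_trans jk).
have [e|ne] := eqVneq (step (iter k step B)) (iter k step B).
  by left; exists k.
right; rewrite /= addnS; apply: (leq_trans _ IH); rewrite ltn_add2r.
by rewrite proper_card // finset.properEneq ne step_sub.
Qed.

Lemma cs_fix B i : i \in cs_final b A B r ->
  step (cs_final b A B r) = cs_final b A B r.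
Proof.
rewrite /cs_final => iS.
have [[j [jn hj]]|small] := fix_or_small B n.
  have e1 := @iter_stable B j hj n jn.
  have e2 := @iter_stable B j hj n.+1 (leq_trans jn (leqnSn n)).
  by move: e2; rewrite /= e1.
exfalso; move: small; rewrite -ltnS.
have : (#|B| <= n)%N by rewrite -[n in (_ <= n)%N]card_ord max_card.
have : (0 < #|iter n step B|)%N by apply/card_gt0P; exists i.
move=> h1 h2 h3; lia.
Qed.
Lemma ss_in (B T : {set 'I_n}) : 0 <= r -> T != finset.set0 ->
  (forall i, i \in T -> r <= #|T|%:R * b i (T :|: A)) ->
  (forall i (S1 S2 : {set 'I_n}), i \in T -> S1 \subset S2 -> b i S1 <= b i S2) ->
  T \subset B -> forall k, T \subset iter k step B.
Proof.
move=> r0 Tn hT mono TB; elim => [|k IH] //=.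
have Tpos : (0 < #|T|)%N by rewrite card_gt0.
apply/subsetP => i iT; have iS := subsetP IH i iT.
rewrite /cs_step !inE iS andbT /= -leNgt.
have Spos : (0 < #|iter k step B|)%N by apply/card_gt0P; exists i.
apply: (@le_trans _ _ (r / #|T|%:R)).
  apply: ler_wpM2l => //; rewrite lef_pV2 ?posrE ?ltr0n // ler_nat.
  exact: subset_leq_card.
apply: (@le_trans _ _ (b i (T :|: A))).
  by rewrite ler_pdivrMr ?ltr0n // mulrC hT.
by apply: mono => //; exact: finset.setSU.
Qed.

Lemma revenue_eq (S : {set 'I_n}) (q : R) :
  revenue (A :|: S, fun i => if i \in S then q / #|S|%:R else 0) =
  if S == finset.set0 then 0 else q.
Proof.
rewrite /revenue /= -big_mkcondr /=.
rewrite (eq_bigl (fun i => i \in S)); last first.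
  by move=> i; rewrite !inE; case: (i \in S); rewrite ?orbT ?andbF.
rewrite sumr_const; have [->|Sn] := eqVneq S finset.set0.
  by rewrite cards0 mulr0n.
rewrite -(mulr_natr (q / _)) divfK // pnatr_eq0 -lt0n card_gt0 //.
Qed.
End CS.
Section Truth.
Variables (R : realType) (n : nat).
Implicit Types (b : profile R n) (S B A C : {set 'I_n}).

Lemma step_off b1 b2 A r S i j : (forall k, k != i -> b1 k = b2 k) -> j != i ->
  (j \in cs_step b1 A r S) = (j \in cs_step b2 A r S).
Proof. by move=> h ji; rewrite /cs_step !inE h. Qed.

Lemma step_eq_out b1 b2 A r S i : (forall k, k != i -> b1 k = b2 k) -> i \notin S ->
  cs_step b1 A r S = cs_step b2 A r S.
Proof.
move=> h iS; apply/setP => j; have [->|ji] := eqVneq j i.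
  by rewrite /cs_step !inE (negbTE iS) ?andbF.
exact: (step_off _ _ _ _ _ _ _ h ji).
Qed.

Lemma step_eq_in b1 b2 A r S i : (forall k, k != i -> b1 k = b2 k) ->
  i \in cs_step b1 A r S -> i \in cs_step b2 A r S ->
  cs_step b1 A r S = cs_step b2 A r S.
Proof.
move=> h i1 i2; apply/setP => j; have [->|ji] := eqVneq j i; first by rewrite i1 i2.
exact: (step_off _ _ _ _ _ _ _ h ji).
Qed.

Lemma iter_eq_out b1 b2 A r B i : (forall k, k != i -> b1 k = b2 k) -> i \notin B ->
  forall k, iter k (cs_step b1 A r) B = iter k (cs_step b2 A r) B.
Proof.
move=> h iB; elim => [|k IH] //=; rewrite IH; apply: (step_eq_out _ _ _ _ _ _ h).
apply: contra iB; apply/subsetP; rewrite -IH; exact: iter_step_sub.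
Qed.

Lemma run_cases b1 b2 A r B i : (forall k, k != i -> b1 k = b2 k) ->
  forall k,
  [\/ iter k (cs_step b2 A r) B = iter k (cs_step b1 A r) B,
      (exists m, [/\ i \in iter m (cs_step b1 A r) B,
                     i \notin cs_step b1 A r (iter m (cs_step b1 A r) B) &
                     iter k (cs_step b2 A r) B \subset iter m (cs_step b1 A r) B])
    | i \notin iter k (cs_step b2 A r) B].
Proof.
move=> h; elim => [|k IH]; first by apply: Or31.
have gsub : forall S, cs_step b2 A r S \subset S by move=> S; apply: step_sub.
case: IH => [e|[m [h1 h2 h3]]|ni].
- rewrite /= e.
  have [iS|iS] := boolP (i \in iter k (cs_step b1 A r) B); last first.
    by apply: Or31; rewrite (step_eq_out _ _ _ _ _ _ h iS).
  have [if_|if_] := boolP (i \in cs_step b1 A r (iter k (cs_step b1 A r) B)); last first.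
    apply: Or32; exists k; split => //.
  have [ig|ig] := boolP (i \in cs_step b2 A r (iter k (cs_step b1 A r) B)); last by apply: Or33.
  by apply: Or31; rewrite (step_eq_in _ _ _ _ _ _ h if_ ig).
- by apply: Or32; exists m; split => //=; apply: fintype.subset_trans (gsub _) h3.
- apply: Or33; apply: contra ni; apply/subsetP; exact: gsub.
Qed.
End Truth.
Section Truth2.
Variables (R : realType) (n : nat).
Implicit Types (b : profile R n) (S B A C : {set 'I_n}).

Lemma step_in b A r S i : i \in cs_step b A r S -> r / #|S|%:R <= b i (S :|: A).
Proof. by rewrite /cs_step !inE => /andP[/negP h iS]; rewrite leNgt; apply/negP; rewrite iS in h. Qed.

Lemma step_out b A r S i : i \in S -> i \notin cs_step b A r S -> b i (S :|: A) < r / #|S|%:R.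
Proof. by rewrite /cs_step !inE => iS; rewrite iS andbT negbK => /andP[]. Qed.

Lemma rX_agree b1 b2 X C : (forall k, k \in C -> b1 k = b2 k) -> r_X b1 X C = r_X b2 X C.
Proof.
move=> h; rewrite /r_X; congr sup; apply/funext => x; apply/propext.
split => -[c [T [c0 TC hT ->]]]; exists c, T; split => // j jT.
  by rewrite -h ?(subsetP TC) //; apply: hT.
by rewrite h ?(subsetP TC) //; apply: hT.
Qed.

Lemma in_grp (p : {ffun 'I_n -> 'I_3}) k i : (i \in grp p k) = (p i == k :> nat).
Proof. by rewrite inE. Qed.

Lemma truthful_mech (p : {ffun 'I_n -> 'I_3}) : truthful (@mech R n p).
Proof.
move=> i vi [v0 vout vmono vsub] b bi.
set b1 := upd b i vi; set b2 := upd b i bi.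
have h : forall k, k != i -> b1 k = b2 k.
  by move=> k ki; rewrite /b1 /b2 /upd (negbTE ki).
have hi : b1 i = vi by rewrite /b1 /upd eqxx.
rewrite /utility /mech /=.
set A := grp p 0; set B := grp p 1; set C := grp p 2.
have hABC : [\/ (p i == 0 :> nat), (p i == 1 :> nat) | (p i == 2 :> nat)].
  by case: (p i) => [[|[|[|m]]] hm] //=; [apply: Or31|apply: Or32|apply: Or33].
have csB : forall (bb : profile R n) (r : R), cs_final bb A B r \subset B.
  by move=> bb r; rewrite /cs_final; apply: iter_step_sub.
case: hABC => hp.
-
  have iC : i \notin C by rewrite in_grp (eqP hp).
  have iB : i \notin B by rewrite in_grp (eqP hp).
  have hC : forall k, k \in C -> b2 k = b1 k by move=> k kC; apply/esym/h; apply: contraNneq iC => <-.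
  rewrite !(rX_agree _ _ _ _ hC).
  by rewrite /cs_final (iter_eq_out _ _ _ _ _ _ _ _ h iB).
-
  have iC : i \notin C by rewrite in_grp (eqP hp).
  have iA : i \notin A by rewrite in_grp (eqP hp).
  have hC : forall k, k \in C -> b2 k = b1 k by move=> k kC; apply/esym/h; apply: contraNneq iC => <-.
  rewrite !(rX_agree _ _ _ _ hC).
  set r := Num.max _ _.
  have r0 : 0 <= r by rewrite le_max rX_ge0.
  set S1 := cs_final b1 A B r; set S2 := cs_final b2 A B r.
  have uT : 0 <= (if i \in A :|: S1 then vi (A :|: S1) - (if i \in S1 then r / #|S1|%:R else 0) else 0).
    rewrite finset.in_setU (negbTE iA) /=; case: ifP => // iS1.
    have e1 := @cs_fix _ _ _ _ _ _ _ iS1.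
    have iS1' : i \in cs_step b1 A r S1 by rewrite /S1 e1.
    have := step_in _ _ _ _ _ iS1'; rewrite hi => hh.
    by rewrite subr_ge0 finset.setUC iS1.
  have [e|[m [h1 h2 h3]]|ni] := run_cases _ _ _ _ A r B _ h n.
  + by rewrite /S2 /cs_final e.
  + rewrite finset.in_setU (negbTE iA) /=; case: ifP => // iS2.
    apply: le_trans uT; rewrite iS2 subr_le0.
    have hlt := step_out _ _ _ _ _ h1 h2; rewrite hi in hlt.
    set Sm := iter m _ B in h1 h2 h3 hlt.
    have Spos : (0 < #|S2|)%N by apply/card_gt0P; exists i.
    apply: (le_trans (vmono _ (Sm :|: A) _)).
      by rewrite finset.setUC finset.setSU.
    apply: (le_trans (ltW hlt)); apply: ler_wpM2l => //.
    by rewrite lef_pV2 ?posrE ?ltr0n ?(leq_trans Spos) ?subset_leq_card // ler_nat subset_leq_card.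
  + by rewrite finset.in_setU (negbTE iA) /= (negbTE ni).
-
  have iA : i \notin A by rewrite in_grp (eqP hp).
  have iB : i \notin B by rewrite in_grp (eqP hp).
  have nS : forall (bb : profile R n) (r : R), i \notin cs_final bb A B r.
    by move=> bb r; apply: contra iB; apply/subsetP; apply: csB.
  by rewrite !finset.in_setU (negbTE iA) /= (negbTE (nS _ _)) (negbTE (nS _ _)).
Qed.
End Truth2.
Section Split.
Variables (R : realType) (n : nat).

Lemma split_lb (v : profile R n) (Ss X Y Z : {set 'I_n}) (c : R) :
  (forall i, valuation_ok i (v i)) -> 0 <= c -> (forall i, i \in Ss -> c <= v i Ss) ->
  Ss \subset X :|: Y :|: Z ->
  c / 2 * #|Ss :&: Y|%:R <= r_X v X Y + r_X v Z Y.
Proof.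
move=> vok c0 hc cov.
have mono : forall i (S1 S2 : {set 'I_n}), S1 \subset S2 -> v i S1 <= v i S2.
  by move=> i S1 S2; case: (vok i) => _ _ m _; apply: m.
set Ys := Ss :&: Y.
pose ss (U : {set 'I_n}) := (U \subset Ys) && [forall i in U, c / 2 <= v i (U :|: X)].
have ss0 : ss finset.set0.
  by rewrite /ss finset.sub0set /=; apply/forallP => i; rewrite finset.in_set0.
case: (arg_maxnP (fun U : {set 'I_n} => #|U|) ss0) => T /andP[TY /forallP Tf] Tmax.
have YsY : Ys \subset Y by apply: finset.subsetIr.
set P := Ys :\: T.
have c2 : 0 <= c / 2 by rewrite divr_ge0.
have h1 : c / 2 * #|T|%:R <= r_X v X Y.
  apply: rX_ge => //; first exact: fintype.subset_trans TY YsY.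
  by move=> i iT; have := Tf i; rewrite iT.
have h2 : c / 2 * #|P|%:R <= r_X v Z Y.
  apply: rX_ge => //; first exact: fintype.subset_trans (subsetDl _ _) YsY.
  move=> i; rewrite /P !inE => /andP[iT /andP[iSs iY]].
  have [hle|hlt] := leP (c / 2) (v i ((i |: T) :|: X)).
    exfalso.
    have ssi : ss (i |: T).
      rewrite /ss; apply/andP; split.
        by rewrite finset.subUset finset.sub1set TY andbT /Ys !inE iSs iY.
      apply/forallP => j; apply/implyP; rewrite !inE => /orP[/eqP->|jT] //.
      apply: le_trans (mono j (T :|: X) _ _).
        by have := Tf j; rewrite jT.
      by apply: finset.setSU; apply: finset.subsetUr.
    have := Tmax _ ssi; rewrite cardsU1 iT /=.
    by rewrite ltnn.
  set U1 := (i |: T) :|: X; set U2 := P :|: Z.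
  have iU : i \in U1 :&: U2 by rewrite /U1 /U2 /P /Ys !inE eqxx /= iT iSs iY.
  have sub : Ss \subset U1 :|: U2.
    apply/subsetP => x xS; have := subsetP cov x xS; rewrite /U1 /U2 /P /Ys !inE.
    case/orP => [/orP[xX|xY]|xZ]; rewrite ?xX ?xZ ?orbT //.
    by case: (boolP (x \in T)) => xT; rewrite ?xT ?orbT //= xS xY !orbT.
  have := hc i iSs; have := mono i _ _ sub.
  case: (vok i) => _ _ _ /(_ _ _ iU) hs.
  move=> hm hci; lra.
have e : (#|T| + #|P|)%N = #|Ys|.
  by rewrite -(cardsID T Ys) (finset.setIidPr TY).
rewrite -/Ys -e natrD mulrDr; lra.
Qed.
End Split.
Section Comb.
Variables (R : realType) (n : nat).

Lemma arith3 (a b c : nat) :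
  4 * a%:R * b%:R * c%:R <= a%:R * ((a + b + c)%:R - 1) ^+ 2 :> R.
Proof.
case: a => [|a]; first by rewrite mulr0n mulr0 !mul0r.
rewrite !natrD -!natr1.
have hb : 0 <= b%:R :> R by apply: ler0n.
have hc : 0 <= c%:R :> R by apply: ler0n.
have ha : 0 <= a%:R :> R by apply: ler0n.
set x := a%:R; set y := b%:R; set z := c%:R.
have h1 : 4 * y * z <= (y + z) ^+ 2.
  have := sqr_ge0 (y - z); rewrite !expr2; nra.
have h2 : (y + z) ^+ 2 <= (x + 1 + y + z - 1) ^+ 2.
  rewrite !expr2; nra.
nra.
Qed.

Definition o0 : 'I_3 := @Ordinal 3 0 isT.
Definition o1 : 'I_3 := @Ordinal 3 1 isT.
Definition o2 : 'I_3 := @Ordinal 3 2 isT.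

Lemma ord3P (j : 'I_3) : [\/ j = o0, j = o1 | j = o2].
Proof.
case: j => [[|[|[|m]]] hm] //.
- by apply: Or31; apply: val_inj.
- by apply: Or32; apply: val_inj.
- by apply: Or33; apply: val_inj.
Qed.

Lemma count3 (p : {ffun 'I_n -> 'I_3}) (Ss : {set 'I_n}) :
  (#|Ss :&: grp p 0| + #|Ss :&: grp p 1| + #|Ss :&: grp p 2|)%N = #|Ss|.
Proof.
rewrite -(cardsID (grp p 0) Ss) -addnA; congr (_ + _)%N.
rewrite -(cardsID (grp p 1) (Ss :\: grp p 0)); congr (_ + _)%N.
  by apply: eq_card => x; rewrite !inE; case: (p x) => [[|[|[|m]]] hm] //=; rewrite ?andbF ?andbT.
by apply: eq_card => x; rewrite !inE; case: (p x) => [[|[|[|m]]] hm] //=; rewrite ?andbF ?andbT.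
Qed.

Lemma arith3j (p : {ffun 'I_n -> 'I_3}) (Ss : {set 'I_n}) (j : 'I_3) :
  4 * (#|Ss :&: grp p 0| * #|Ss :&: grp p 1| * #|Ss :&: grp p 2|)%:R
  <= #|Ss :&: grp p j|%:R * (#|Ss|%:R - 1) ^+ 2 :> R.
Proof.
rewrite -(count3 p Ss) !natrM.
set a := #|Ss :&: grp p 0|; set b := #|Ss :&: grp p 1|; set c := #|Ss :&: grp p 2|.
case: (ord3P j) => ->.
- rewrite -[grp p o0]/(grp p 0) -/a. have := arith3 a b c. lra.
- rewrite -[grp p o1]/(grp p 1) -/b. have := arith3 b a c. rewrite (addnC b a). lra.
- rewrite -[grp p o2]/(grp p 2) -/c. have := arith3 c a b. have -> : (c + a + b = a + b + c)%N by lia. lra.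
Qed.
End Comb.
Section Rev.
Variables (R : realType) (n : nat).

Definition Gv (v : profile R n) (A B C : {set 'I_n}) : R :=
  let r := Num.max (r_X v A C) (r_X v B C) in if r <= r_X v A B then r else 0.

Lemma Gv_ge0 v A B C : 0 <= Gv v A B C.
Proof. by rewrite /Gv; case: ifP => // _; rewrite le_max rX_ge0. Qed.

Lemma rev_lb (v : profile R n) (p : {ffun 'I_n -> 'I_3}) :
  (forall i, valuation_ok i (v i)) ->
  Gv v (grp p 0) (grp p 1) (grp p 2) <= revenue (mech p v).
Proof.
move=> vok; rewrite /mech /Gv /=.
set A := grp p 0; set B := grp p 1; set C := grp p 2.
set r := Num.max _ _.
have r0 : 0 <= r by rewrite le_max rX_ge0.
rewrite revenue_eq.
case: ifP => hr; last by case: eqP.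
have [rpos|rz] := ltP 0 r; last first.
  have -> : r = 0 by apply/le_anti; rewrite rz r0.
  by case: eqP.
have [T [TB Tn hT]] := rX_attain _ _ _ _ _ _ rpos hr.
have mono : forall i (S1 S2 : {set 'I_n}), i \in T -> S1 \subset S2 -> v i S1 <= v i S2.
  by move=> i S1 S2 _; case: (vok i) => _ _ m _; apply: m.
have := ss_in _ _ _ _ _ B T r0 Tn hT mono TB n.
rewrite -/(cs_final v A B r) => TS.
case: eqP => // S0; move: TS; rewrite S0 finset.subset0 => /eqP T0.
by move: Tn; rewrite T0 eqxx.
Qed.

Lemma grp_perm (p : {ffun 'I_n -> 'I_3}) (t : {perm 'I_3}) (j : 'I_3) :
  grp [ffun x => (t^-1)%g (p x)] j = grp p (t j).
Proof.
apply/setP => x; rewrite !inE ffunE.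
have e : forall a b : 'I_3, (nat_of_ord a == nat_of_ord b) = (a == b) by [].
by rewrite !e -(inj_eq (@perm_inj _ t)) permKV.
Qed.

Lemma reidx (F : {set 'I_n} -> {set 'I_n} -> {set 'I_n} -> R) (t : {perm 'I_3}) :
  \sum_(p : {ffun 'I_n -> 'I_3}) F (grp p 0) (grp p 1) (grp p 2) =
  \sum_(p : {ffun 'I_n -> 'I_3}) F (grp p (t o0)) (grp p (t o1)) (grp p (t o2)).
Proof.
rewrite (reindex_inj (h := fun p : {ffun 'I_n -> 'I_3} => [ffun x => (t^-1)%g (p x)])).
  apply: eq_bigr => p _.
  by rewrite -[0%N]/(nat_of_ord o0) -[1%N]/(nat_of_ord o1) -[2%N]/(nat_of_ord o2) !grp_perm.
move=> p q /ffunP e; apply/ffunP => x; have := e x; rewrite !ffunE.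
exact: perm_inj.
Qed.
End Rev.
Arguments Gv {R n}.
Section Point.
Variables (R : realType) (n : nat).

Lemma pointwise (v : profile R n) (p : {ffun 'I_n -> 'I_3}) (Ss : {set 'I_n}) (c : R) :
  (forall i, valuation_ok i (v i)) -> 0 <= c -> (forall i, i \in Ss -> c <= v i Ss) ->
  c * (#|Ss :&: grp p 0| * #|Ss :&: grp p 1| * #|Ss :&: grp p 2|)%:R <=
  (#|Ss|%:R - 1) ^+ 2 *
    \sum_(t : {perm 'I_3}) Gv v (grp p (t o0)) (grp p (t o1)) (grp p (t o2)).
Proof.
move=> vok c0 hc.
pose phi (t : {perm 'I_3}) := r_X v (grp p (t o0)) (grp p (t o1)).
case: (@arg_maxP _ R {perm 'I_3} 1%g xpredT phi isT) => ts _ tsmax.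
set X := grp p (ts o0); set Z := grp p (ts o1); set Y := grp p (ts o2).
have d01 : o0 != o1 by []. have d02 : o0 != o2 by []. have d12 : o1 != o2 by [].
have e1 : phi (tperm o1 o2 * ts)%g = r_X v X Y.
  have f1 : tperm o1 o2 o0 = o0 by apply: tpermD.
  by rewrite /phi !permM f1 tpermL.
have e2 : phi (tperm o0 o1 * tperm o0 o2 * ts)%g = r_X v Z Y.
  have f1 : tperm o0 o2 o1 = o1 by apply: tpermD.
  by rewrite /phi !permM (tpermL o0 o1) (tpermR o0 o1) f1 (tpermL o0 o2).
have hm : Num.max (r_X v X Y) (r_X v Z Y) <= r_X v X Z.
  rewrite ge_max; apply/andP; split.
    by rewrite -e1; apply: tsmax.
  by rewrite -e2; apply: tsmax.
have HG : Gv v X Z Y = Num.max (r_X v X Y) (r_X v Z Y) by rewrite /Gv hm.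
have cov : Ss \subset X :|: Y :|: Z.
  apply/subsetP => x _; rewrite /X /Y /Z !inE.
  have : p x = ts ((ts^-1)%g (p x)) by rewrite permKV.
  by case: (ord3P ((ts^-1)%g (p x))) => -> ->; rewrite eqxx ?orbT.
have hs := split_lb R n v Ss X Y Z c vok c0 hc cov.
have hsum := sum_ge_term R _ (fun t : {perm 'I_3} => Gv v (grp p (t o0)) (grp p (t o1)) (grp p (t o2))) ts
  (fun t => Gv_ge0 _ _ _ _ _ _).
rewrite /= -/X -/Y -/Z HG in hsum.
have ha := arith3j R n p Ss (ts o2); rewrite -/Y in ha.
set M := Num.max _ _ in HG hsum hm.
have hM : r_X v X Y + r_X v Z Y <= 2 * M.
  have : r_X v X Y <= M by rewrite le_max lexx.
  have : r_X v Z Y <= M by rewrite le_max lexx orbT.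
  lra.
set P := (_ * _ * _)%N in ha *.
set a := #|Ss :&: Y| in ha hs.
set S := \sum_t _ in hsum *.
have K0 : 0 <= (#|Ss|%:R - 1) ^+ 2 :> R by apply: sqr_ge0.
set K := (_ - 1) ^+ 2 in ha K0 *.
have P0 : 0 <= P%:R :> R by apply: ler0n.
have a0 : 0 <= a%:R :> R by apply: ler0n.
have g1 : c * (4 * P%:R) <= c * (a%:R * K) by apply: ler_wpM2l.
have ca : c * a%:R <= 4 * S by lra.
have g2 : c * a%:R * K <= 4 * S * K by apply: ler_wpM2r.
lra.
Qed.
End Point.
Section Count.
Variables (R : realType) (n : nat).

Lemma sum_const_card (I : finType) (P : pred I) (x : R) :
  \sum_(i | P i) x = #|P|%:R * x.
Proof. by rewrite sumr_const mulr_natl. Qed.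

Lemma card_ind (p : {ffun 'I_n -> 'I_3}) (Ss : {set 'I_n}) (j : nat) :
  #|Ss :&: grp p j|%:R = \sum_(x in Ss) ((p x == j :> nat)%:R : R).
Proof.
rewrite (eq_bigr (fun x => if (p x == j :> nat) then 1 else 0)); last by move=> x _; case: eqP.
rewrite -big_mkcondr /= (eq_bigl (fun x => x \in Ss :&: grp p j)); last first.
  by move=> x; rewrite !inE.
by rewrite sum_const_card mulr1.
Qed.

Lemma triple_sum (x y z : 'I_n) : x != y -> x != z -> y != z ->
  \sum_(p : {ffun 'I_n -> 'I_3})
     ((p x == 0 :> nat)%:R * (p y == 1 :> nat)%:R * (p z == 2 :> nat)%:R : R)
  = 3%:R ^+ (n - 3).
Proof.
move=> xy xz yz.
pose F (w : 'I_n) (j : 'I_3) : R :=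
  if w == x then (j == o0)%:R else if w == y then (j == o1)%:R
  else if w == z then (j == o2)%:R else 1.
have eF : forall p : {ffun 'I_n -> 'I_3},
    ((p x == 0 :> nat)%:R * (p y == 1 :> nat)%:R * (p z == 2 :> nat)%:R : R)
    = \prod_w F w (p w).
  move=> p; rewrite (bigD1 x) // (bigD1 y) /=; last by rewrite eq_sym.
  rewrite (bigD1 z) /=; last by rewrite eq_sym xz eq_sym.
  rewrite big1 ?mulr1; last first.
    by move=> w /andP[/andP[wx wy] wz]; rewrite /F (negbTE wx) (negbTE wy) (negbTE wz).
  have yx : (y == x) = false by rewrite eq_sym (negbTE xy).
  have zx : (z == x) = false by rewrite eq_sym (negbTE xz).
  have zy : (z == y) = false by rewrite eq_sym (negbTE yz).
  rewrite /F !eqxx yx zx zy ?(negbTE xy) ?(negbTE xz) ?(negbTE yz).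
  by rewrite mulrA.
rewrite (eq_bigr _ (fun p _ => eF p)) -bigA_distr_bigA /=.
have e1 : forall w, \sum_(j : 'I_3) F w j = if w \in [set x; y; z]%SET then 1 else 3%:R.
  move=> w; rewrite /F !inE.
  case: (eqVneq w x) => [_|wx] /=.
    by rewrite (bigD1 o0) //= big1 ?addr0 // => j /negbTE ->.
  case: (eqVneq w y) => [_|wy] /=.
    by rewrite (bigD1 o1) //= big1 ?addr0 // => j /negbTE ->.
  case: (eqVneq w z) => [_|wz] /=.
    by rewrite (bigD1 o2) //= big1 ?addr0 // => j /negbTE ->.
  by rewrite sumr_const card_ord.
rewrite (eq_bigr _ (fun w _ => e1 w)).
rewrite (bigID (fun w => w \in [set x; y; z]%SET)) /=.
rewrite big1; last by move=> w ->.
rewrite mul1r (eq_bigr (fun _ => 3%:R)); last by move=> w /negbTE ->.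
rewrite prodr_const; congr (_ ^+ _).
have c3 : #|[set x; y; z]%SET| = 3.
  have -> : [set x; y; z]%SET = x |: [set y; z]%SET by apply/setP => w; rewrite !inE orbA.
  by rewrite cardsU1 cards2 yz !inE negb_or xy xz.
have hc := cardsC [set x; y; z]%SET; rewrite c3 card_ord in hc.
rewrite (@eq_card _ _ (~: [set x; y; z]%SET)); last by move=> w; rewrite -topredE /= !inE.
lia.
Qed.
End Count.
Section Count2.
Variables (R : realType) (n : nat).
Local Notation ind p x j := (((p x : 'I_3) == j :> nat)%:R : R).

Lemma triple_all (x y z : 'I_n) :
  \sum_(p : {ffun 'I_n -> 'I_3}) (ind p x 0 * ind p y 1 * ind p z 2)
  = if [&& x != y, x != z & y != z] then 3%:R ^+ (n - 3) else 0.
Proof.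
case: (boolP [&& x != y, x != z & y != z]) => [/and3P[xy xz yz]|h].
  exact: triple_sum.
apply: big1 => p _.
move: h; rewrite !negb_and !negbK => /or3P[/eqP->|/eqP->|/eqP->].
- by case: (p y) => [[|[|[|m]]] hm]; rewrite /= ?mulr0 ?mul0r.
- by case: (p z) => [[|[|[|m]]] hm]; rewrite /= ?mulr0 ?mul0r.
- by case: (p z) => [[|[|[|m]]] hm]; rewrite /= ?mulr0 ?mul0r.
Qed.

Lemma count_triples (Ss : {set 'I_n}) (Q : R) :
  \sum_(x in Ss) \sum_(y in Ss) \sum_(z in Ss)
     (if [&& x != y, x != z & y != z] then Q else 0)
  = (#|Ss| * (#|Ss| - 1) * (#|Ss| - 2))%:R * Q.
Proof.
have inner : forall x y, x \in Ss -> y \in Ss ->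
  \sum_(z in Ss) (if [&& x != y, x != z & y != z] then Q else 0)
  = if x != y then (#|Ss| - 2)%:R * Q else 0.
  move=> x y xS yS; case: (eqVneq x y) => [->|xy] /=.
    by apply: big1.
  rewrite -big_mkcondr /= sum_const_card; congr (_%:R * _).
  rewrite (@eq_card _ _ (Ss :\: [set x; y]%SET)); last first.
    by move=> z; rewrite -topredE /= !inE ![z == _]eq_sym negb_or andbC.
  have := cardsID [set x; y]%SET Ss.
  have -> : Ss :&: [set x; y]%SET = [set x; y]%SET.
    by apply/finset.setIidPr; rewrite finset.subUset !finset.sub1set xS yS.
  rewrite cards2 xy /=; lia.
rewrite (eq_bigr (fun x => if x \in Ss then (#|Ss| - 1)%:R * ((#|Ss| - 2)%:R * Q) else 0)).
  rewrite -big_mkcondr /= (eq_bigl (fun x => x \in Ss)); last by move=> x; rewrite andbb.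
  by rewrite sum_const_card !natrM !mulrA.
move=> x xS; rewrite xS.
rewrite (eq_bigr (fun y => if x != y then (#|Ss| - 2)%:R * Q else 0)); last first.
  by move=> y yS; rewrite inner.
rewrite -big_mkcondr /= sum_const_card; congr (_%:R * _).
rewrite (@eq_card _ _ (Ss :\ x)); last first.
  by move=> z; rewrite -topredE /= !inE eq_sym andbC.
have := cardsD1 x Ss; rewrite xS /=; lia.
Qed.

Lemma sum_prod (Ss : {set 'I_n}) :
  \sum_(p : {ffun 'I_n -> 'I_3})
     (#|Ss :&: grp p 0| * #|Ss :&: grp p 1| * #|Ss :&: grp p 2|)%:R
  = (#|Ss| * (#|Ss| - 1) * (#|Ss| - 2))%:R * 3%:R ^+ (n - 3) :> R.
Proof.
have E : forall p : {ffun 'I_n -> 'I_3},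
  (#|Ss :&: grp p 0| * #|Ss :&: grp p 1| * #|Ss :&: grp p 2|)%:R =
  \sum_(x in Ss) \sum_(y in Ss) \sum_(z in Ss) (ind p x 0 * ind p y 1 * ind p z 2) :> R.
  move=> p; rewrite !natrM !card_ind big_distrlr /= mulr_suml.
  by apply: eq_bigr => x _; rewrite big_distrlr.
rewrite (eq_bigr _ (fun p _ => E p)) exchange_big /=.
rewrite -count_triples; apply: eq_bigr => x _.
rewrite exchange_big; apply: eq_bigr => y _.
rewrite exchange_big; apply: eq_bigr => z _.
exact: triple_all.
Qed.
End Count2.
Section Main.
Variables (R : realType) (n : nat).

Lemma main_bound (hn : (3 <= n)%N) (v : profile R n) (Ss : {set 'I_n}) (c : R) :
  (forall i, valuation_ok i (v i)) -> 0 <= c -> (3 <= #|Ss|)%N ->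
  (forall i, i \in Ss -> c <= v i Ss) ->
  c * #|Ss|%:R <= exp_revenue v * 324.
Proof.
move=> vok c0 k3 hc.
set Srev := \sum_(p : {ffun 'I_n -> 'I_3}) revenue (mech p v).
set G0 := \sum_(p : {ffun 'I_n -> 'I_3}) Gv v (grp p 0) (grp p 1) (grp p 2).
have h1 : G0 <= Srev by apply: ler_sum => p _; apply: rev_lb.
have h2 : \sum_(p : {ffun 'I_n -> 'I_3}) \sum_(t : {perm 'I_3})
            Gv v (grp p (t o0)) (grp p (t o1)) (grp p (t o2)) = 6 * G0.
  rewrite exchange_big /=.
  rewrite (eq_bigr (fun _ => G0)); last by move=> t _; rewrite /G0 (reidx _ _ _ t).
  by rewrite sumr_const card_Sn mulr_natl.
pose K : R := (#|Ss|%:R - 1) ^+ 2.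
have h3 : c * \sum_(p : {ffun 'I_n -> 'I_3})
     (#|Ss :&: grp p 0| * #|Ss :&: grp p 1| * #|Ss :&: grp p 2|)%:R
   <= K * (6 * G0).
  rewrite -h2 mulr_sumr mulr_sumr; apply: ler_sum => p _.
  exact: pointwise.
rewrite sum_prod in h3.
set Q := 3%:R ^+ (n - 3) in h3.
have Q0 : 0 < Q by apply: exprn_gt0.
have e3 : (3 ^ n)%:R = 27 * Q :> R.
  by rewrite natrX /Q -[in LHS](subnKC hn) exprD -natrX.
rewrite /exp_revenue -/Srev e3.
rewrite /K in h3.
set k := #|Ss| in h3 k3 *.
have kR : 3 <= k%:R :> R by rewrite (ler_nat R 3 k).
rewrite !natrM !natrB in h3; try lia.
set x := k%:R in h3 kR *.
have hk1 : 0 < x - 1 by lra.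
have h4 : c * x * (x - 2) * Q <= 6 * (x - 1) * Srev.
  have h5 : (x - 1) * (c * x * (x - 2) * Q) <= (x - 1) * (6 * (x - 1) * Srev).
    have -> : (x - 1) * (c * x * (x - 2) * Q) = c * (x * (x - 1) * (x - 2) * Q) by ring.
    have -> : (x - 1) * (6 * (x - 1) * Srev) = (x - 1) ^+ 2 * (6 * Srev) by rewrite expr2; ring.
    apply: (le_trans h3); apply: ler_wpM2l; first exact: sqr_ge0.
    by rewrite ler_pM2l //; lra.
  by rewrite ler_pM2l in h5.
have cx0 : 0 <= c * x * Q by rewrite !mulr_ge0 //; lra.
have h6 : (x - 1) * (c * x * Q) <= (x - 1) * (12 * Srev).
  have : (x - 1) * (c * x * Q) <= 2 * (c * x * (x - 2) * Q).
    have -> : 2 * (c * x * (x - 2) * Q) = (2 * x - 4) * (c * x * Q) by ring.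
    by apply: ler_wpM2r => //; lra.
  lra.
rewrite ler_pM2l // in h6.
have -> : (27 * Q)^-1 * Srev * 324 = 12 * Srev / Q :> R.
  by field; rewrite lt0r_neq0.
by rewrite ler_pdivlMr.
Qed.
End Main.

Local Close Scope classical_set_scope.

Theorem theorem1 (R : realType) (n : nat) (hn : (3 <= n)%N) :
  (forall p : {ffun 'I_n -> 'I_3}, truthful (@mech R n p)) /\
  (forall v : profile R n, (forall i : 'I_n, valuation_ok i (v i)) ->
     F3 v / 324 <= exp_revenue v).
Proof.
split; first by move=> p; apply: truthful_mech.
move=> v vok; rewrite ler_pdivrMr //; apply: ge_sup.
  exists 0, 0, finset.setT; split => //.
  - by rewrite cardsT card_ord.
  - by move=> i _; case: (vok i) => h _ _ _; apply: h.
  - by rewrite mul0r.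
apply/ubP => x [c [S [c0 S3 hS ->]]].
exact: main_bound.
Qed.
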